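(* Let $k\in\mathbb{Z}^+$, let $1<\gamma<k$, and let $(a_n)_{n=1}^\infty$ be a sequence of non-negative real numbers such that for all $n,m\in\mathbb{Z}^+$: (i) $a_{n+m}\leq a_na_m$, and (ii) $a_{kn}\leq a_n^{\gamma}$. Then for every $\tau>\log_k(\gamma)$ one has $a_n=O(e^{n^\tau})$ as $n\to\infty$. *)

(* Defs.v *)
From Stdlib Require Import Reals Lra Lia.
Open Scope R_scope.

(* Real power x^y for x >= 0 with the usual convention 0^y = 0 for y <> 0
   (and 0^0 = 1).  Stdlib's Rpower 0 y = exp (y * ln 0) = 1 would be wrong. *)
Definition rpow (x y : R) : R :=
  if Req_EM_T x 0 then (if Req_EM_T y 0 then 1 else 0) else Rpower x y.

(* Main.v *)
Require Import Defs.
From Stdlib Require Import Reals Lra Lia.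
Open Scope R_scope.

Lemma exp_mono (x y : R) : x <= y -> exp x <= exp y.
Proof.
  intros H. destruct (Req_dec x y) as [->|Hn]; [lra|].
  apply Rlt_le, exp_increasing; lra.
Qed.

Lemma sum_ge_term (f : nat -> R) (m i : nat) :
  (forall j, 0 <= f j) -> (i <= m)%nat -> f i <= sum_f_R0 f m.
Proof.
  intros Hf. induction m as [|m IH]; intros Hi.
  - replace i with 0%nat by lia. simpl. lra.
  - simpl. destruct (Nat.eq_dec i (S m)) as [->|Hne].
    + assert (0 <= sum_f_R0 f m).
      { clear IH Hi. induction m; simpl; [apply Hf|]. specialize (Hf (S m)). lra. }
      lra.
    + specialize (IH ltac:(lia)). specialize (Hf (S m)). lra.
Qed.

Theorem lemma3p4 (k : nat) (gamma : R) (a : nat -> R)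
  (hk : (1 <= k)%nat)
  (hgamma : 1 < gamma < INR k)
  (hnonneg : forall n : nat, (1 <= n)%nat -> 0 <= a n)
  (hsub : forall n m : nat, (1 <= n)%nat -> (1 <= m)%nat -> a (n + m)%nat <= a n * a m)
  (hpow : forall n : nat, (1 <= n)%nat -> a (k * n)%nat <= rpow (a n) gamma) :
  forall tau : R, ln gamma / ln (INR k) < tau ->
    exists (C : R) (N : nat), forall n : nat, (N <= n)%nat ->
      Rabs (a n) <= C * exp (Rpower (INR n) tau).
Proof.
  intros tau Htau.
  assert (Hk1 : 1 < INR k) by lra.
  assert (Hk2 : (2 <= k)%nat).
  { destruct (Nat.le_gt_cases 2 k) as [h|h]; auto.
    replace k with 1%nat in Hk1 by lia. simpl in Hk1. lra. }
  assert (Hlk : 0 < ln (INR k)) by (rewrite <- ln_1; apply ln_increasing; lra).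
  assert (Hlg : 0 < ln gamma) by (rewrite <- ln_1; apply ln_increasing; lra).
  set (s := ln gamma / ln (INR k)) in *.
  assert (Hs : 0 <= s) by (unfold s; apply Rlt_le, Rdiv_lt_0_compat; lra).
  assert (Hks : Rpower (INR k) s = gamma).
  { unfold Rpower. replace (s * ln (INR k)) with (ln gamma) by (unfold s; field; lra).
    apply exp_ln; lra. }
  set (A := sum_f_R0 (fun i => Rabs (a i)) k + 1).
  assert (HA : forall r, (r <= k)%nat -> a r <= A).
  { intros r Hr. unfold A.
    pose proof (sum_ge_term (fun i => Rabs (a i)) k r (fun j => Rabs_pos _) Hr).
    simpl in H. pose proof (Rle_abs (a r)). lra. }
  assert (HA1 : 1 <= A).
  { unfold A. assert (0 <= sum_f_R0 (fun i => Rabs (a i)) k).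
    { pose proof (sum_ge_term (fun i => Rabs (a i)) k 0 (fun j => Rabs_pos _) ltac:(lia)).
      pose proof (Rabs_pos (a 0%nat)). simpl in H. lra. }
    lra. }
  set (L := ln A).
  assert (HL : 0 <= L) by (unfold L; rewrite <- ln_1; destruct (Req_dec A 1) as [->|];
     [lra| apply Rlt_le, ln_increasing; lra]).
  assert (HAL : A = exp L) by (unfold L; rewrite exp_ln; lra).
  set (E := L / (gamma - 1)).
  assert (HE : 0 <= E) by (unfold E; apply Rmult_le_pos; [lra| apply Rlt_le, Rinv_0_lt_compat; lra]).
  assert (HEg : E * gamma = E + L) by (unfold E; field; lra).
  set (D := L + E).
  assert (HD : 0 <= D) by (unfold D; lra).
  assert (Main : forall n, (1 <= n)%nat -> a n <= exp (D * Rpower (INR n) s - E)).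
  { intros n. induction n as [n IH] using (well_founded_induction Wf_nat.lt_wf). intros Hn.
    assert (Hn0 : 0 < INR n) by (apply lt_0_INR; lia).
    destruct (Nat.lt_ge_cases n k) as [Hlt|Hge].
    - assert (1 <= Rpower (INR n) s).
      { rewrite <- (Rpower_O (INR n)) by lra. apply Rle_Rpower; auto.
        apply (le_INR 1) in Hn. simpl in Hn. lra. }
      eapply Rle_trans. apply HA; lia. rewrite HAL. apply exp_mono.
      unfold D. assert (L * 1 <= L * Rpower (INR n) s) by (apply Rmult_le_compat_l; lra).
      assert (E * 1 <= E * Rpower (INR n) s) by (apply Rmult_le_compat_l; lra).
      nra.
    - set (q := (n / k)%nat). set (r := (n mod k)%nat).
      assert (Hdm : n = (k * q + r)%nat) by apply Nat.div_mod_eq.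
      assert (Hq1 : (1 <= q)%nat) by (apply Nat.div_le_lower_bound; lia).
      assert (Hqn : (q < n)%nat) by (apply Nat.div_lt; lia).
      assert (Hr : (r < k)%nat) by (apply Nat.mod_upper_bound; lia).
      assert (Hq0 : 0 < INR q) by (apply lt_0_INR; lia).
      assert (IHq := IH q Hqn Hq1).
      assert (Hkq : a (k * q)%nat <= exp (gamma * (D * Rpower (INR q) s - E))).
      { eapply Rle_trans. apply hpow; lia. unfold rpow.
        destruct (Req_EM_T (a q) 0) as [Ha0|Ha0].
        - destruct (Req_EM_T gamma 0); [lra|]. left; apply exp_pos.
        - assert (0 < a q) by (pose proof (hnonneg q Hq1); lra).
          eapply Rle_trans. apply Rle_Rpower_l. lra. split. auto. exact IHq.
          unfold Rpower. rewrite ln_exp. right; reflexivity. }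
      assert (Hpow : gamma * Rpower (INR q) s <= Rpower (INR n) s).
      { rewrite <- Hks, Rpower_mult_distr by lra. apply Rle_Rpower_l; auto.
        split. nra. rewrite <- mult_INR. apply le_INR. lia. }
      assert (HDp : D * (gamma * Rpower (INR q) s) <= D * Rpower (INR n) s)
        by (apply Rmult_le_compat_l; lra).
      assert (Heq : gamma * (D * Rpower (INR q) s - E) = D * (gamma * Rpower (INR q) s) - (E + L))
        by (rewrite <- HEg; ring).
      rewrite Heq in Hkq.
      destruct (Nat.eq_dec r 0) as [Hr0|Hr0].
      + rewrite Hdm, Hr0, Nat.add_0_r. eapply Rle_trans. apply Hkq. apply exp_mono. replace (k * q)%nat with n by lia. lra.
      + rewrite Hdm. eapply Rle_trans. apply hsub; lia.
        eapply Rle_trans. apply Rmult_le_compat.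
        * apply hnonneg; lia.
        * apply hnonneg; lia.
        * apply Hkq.
        * apply HA; lia.
        * rewrite HAL, <- exp_plus. apply exp_mono. rewrite <- Hdm. lra. }
  set (x0 := Rpower (D + 1) (/ (tau - s))).
  destruct (INR_unbounded x0) as [N0 HN0].
  exists 1, (Nat.max N0 1). intros n Hn.
  assert (Hn0 : 0 < INR n) by (apply lt_0_INR; lia).
  assert (Hx0 : 0 < x0) by (unfold x0, Rpower; apply exp_pos).
  assert (HxN : x0 <= INR n) by (pose proof (le_INR N0 n ltac:(lia)); lra).
  assert (Hbig : D + 1 <= Rpower (INR n) (tau - s)).
  { replace (D + 1) with (Rpower x0 (tau - s)).
    - apply Rle_Rpower_l; lra.
    - unfold x0. rewrite Rpower_mult. replace (/ (tau - s) * (tau - s)) with 1 by (field; lra).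
      apply Rpower_1; lra. }
  rewrite Rabs_right by (apply Rle_ge, hnonneg; lia).
  rewrite Rmult_1_l. eapply Rle_trans. apply Main; lia. apply exp_mono.
  replace tau with ((tau - s) + s) by ring. rewrite Rpower_plus.
  assert (0 < Rpower (INR n) s) by (unfold Rpower; apply exp_pos).
  nra.
Qed.
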